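(* For all $m,n\in\mathbb{Z}$ with $\gcd(m,n)=1$ and $mn(m+n)\neq0$ we have $A(m,n)\ge 29$, and $A(m,n)=29$ holds only when $c=-\frac{A(m,n)}{B(m,n)}=-\frac{29}{16}$. Equivalently, among rational $c$ for which $f_c(x)=x^2+c$ has a rational $3$-cycle, the smallest possible absolute value of the numerator of $c$ is $29$, attained only by $c=-\tfrac{29}{16}$.
   Context: $A(m,n)=m^6+2m^5n+4m^4n^2+8m^3n^3+9m^2n^4+4mn^5+n^6$, $B(m,n)=4m^2n^2(m+n)^2$. Standing fact: $f_c(x)=x^2+c$ ($c\in\mathbb{Q}$) has a rational $3$-cycle if and only if $c=-A(m,n)/B(m,n)$ for some coprime integers $m,n$ with $mn(m+n)\neq0$, and this fraction is then in lowest terms. *)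

(* Defs.v *)
From mathcomp Require Import all_boot all_order all_algebra.
Import GRing.Theory Num.Theory.
Local Open Scope ring_scope.

Definition Apoly (m n : int) : int :=
  m ^+ 6 + 2 * m ^+ 5 * n + 4 * m ^+ 4 * n ^+ 2 + 8 * m ^+ 3 * n ^+ 3
  + 9 * m ^+ 2 * n ^+ 4 + 4 * m * n ^+ 5 + n ^+ 6.

Definition Bpoly (m n : int) : int := 4 * m ^+ 2 * n ^+ 2 * (m + n) ^+ 2.

Definition cpar (m n : int) : rat := - ((Apoly m n)%:~R / (Bpoly m n)%:~R).

(* Main.v *)
Require Import Defs.
From mathcomp Require Import all_boot all_order all_algebra.
From mathcomp Require Import ring lra zify.
Import GRing.Theory Num.Theory.
Local Open Scope ring_scope.

Lemma key (m n : int) : (m^+2 + m*n + n^+2)^+3 <= 2 * Apoly m n.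
Proof.
set u := m^+3; set v := m^+2 * n; set w := m * n^+2; set t := n^+3.
have E : 1520 * (2 * Apoly m n - (m^+2 + m*n + n^+2)^+3) =
  380 * (2*u + v - 3*w - t)^+2 + 20 * (19*v + 23*w + 5*t)^+2
  + 12 * (10*w + 3*t)^+2 + 532 * t^+2.
  by rewrite /u /v /w /t /Apoly; ring.
have H : 0 <= 1520 * (2 * Apoly m n - (m^+2 + m*n + n^+2)^+3).
  rewrite E; have := sqr_ge0 (2*u + v - 3*w - t);
  have := sqr_ge0 (19*v + 23*w + 5*t); have := sqr_ge0 (10*w + 3*t);
  have := sqr_ge0 t. lra.
lra.
Qed.

Lemma small (m n : int) : Apoly m n <= 29 ->
  (m = -2 \/ m = -1 \/ m = 0 \/ m = 1 \/ m = 2) /\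
  (n = -2 \/ n = -1 \/ n = 0 \/ n = 1 \/ n = 2).
Proof.
move=> HA; have K := key m n.
set Q := m^+2 + m*n + n^+2 in K.
have HQ : Q <= 3.
  case: (lerP Q 3) => // Q4.
  have Q4' : 4 <= Q by lia.
  have h1 : 16 <= Q * Q by nra.
  have h2 : 64 <= Q * Q * Q by nra.
  have : Q ^+ 3 = Q * Q * Q by ring.
  lra.
rewrite /Q in HQ; split; nia.
Qed.

Theorem theorem4 (m n : int) :
  gcdz m n = 1 -> m * n * (m + n) != 0 ->
  29 <= Apoly m n /\
  (Apoly m n = 29 -> cpar m n = - (29%:Q / 16%:Q)).
Proof.
move=> Hg Hnz.
case: (lerP 30 (Apoly m n)) => H30.
  split; first lra. by move=> E; rewrite E in H30.
have : Apoly m n <= 29 by rewrite -ltzD1.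
move=> HA; have [Hm Hn] := small m n HA.
case: Hm => [|[|[|[|]]]] Em; case: Hn => [|[|[|[|]]]] En; subst m n;
  try (by exfalso; move: Hnz; vm_compute); try (by exfalso; move: Hg; vm_compute);
  try (by exfalso; move: HA; vm_compute).
all: split; [by vm_compute | move=> _; apply/eqP; by vm_compute].
Qed.
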